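(* Let $\Sigma_1\subseteq (N_1)_\mathbb{R}$ and $\Sigma_2\subseteq(N_2)_\mathbb{R}$ be Ehrhart fans. Then the product fan $\Sigma_1\times\Sigma_2$ in $(N_1\oplus N_2)_\mathbb{R}$ is Ehrhart, and its Ehrhart polynomial is given by \[ \chi_{\Sigma_1\times\Sigma_2}([f_1\times f_2])=\chi_{\Sigma_1}([f_1])\cdot\chi_{\Sigma_2}([f_2]) \] for $f_1\in\mathrm{PL}(\Sigma_1)$, $f_2\in\mathrm{PL}(\Sigma_2)$, where $(f_1\times f_2)(x_1,x_2)=f_1(x_1)+f_2(x_2)$.
   Context: A fan is unimodular if it contains the origin and for each cone the primitive ray generators $u_\rho$ extend to a $\mathbb{Z}$-basis of the lattice. For a lattice $N$ with dual $M=\mathrm{Hom}(N,\mathbb{Z})$ viewed as integral linear functions, $\mathrm{PL}(\Sigma)$ is the group of functions on $|\Sigma|$ agreeing on each cone with some element of $M$ (for unimodular $\Sigma$ every element of $\mathrm{PL}(\Sigma_1\times\Sigma_2)$ is of the form $f_1\times f_2$), $\underline{\mathrm{PL}}(\Sigma)$ its quotient by restrictions of elements of $M$, $\delta_\rho$ the Courant function ($1$ at $u_\rho$, $0$ at other ray generators), $\Sigma^\sigma$ the star fan (image in $N_\mathbb{R}/\mathrm{span}(\sigma)$, lattice $N/\mathrm{Span}_\mathbb{Z}(\sigma\cap N)$, of all faces of cones containing $\sigma$) and $[f]^\sigma$ the class of the function induced by $f-m$, $m\in M$ agreeing with $f$ on $\sigma$. A unimodular fan $\Sigma$ is Ehrhart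 (recursively on dimension) if (1) $\Sigma^\rho$ is Ehrhart for every ray $\rho$, and (2) there is $\chi_\Sigma:\underline{\mathrm{PL}}(\Sigma)\to\mathbb{Z}$ with $\chi_\Sigma(0)=1$ and $\chi_\Sigma([f])=\chi_\Sigma([f-\delta_\rho])+\chi_{\Sigma^\rho}([f]^\rho)$ for all $f\in\mathrm{PL}(\Sigma)$, $\rho\in\Sigma(1)$. Zero-dimensional fans are Ehrhart with $\chi=1$; such $\chi_\Sigma$ is unique (the Ehrhart polynomial). *)

(* Defs.v *)
From HB Require Import structures.
From mathcomp Require Import all_boot all_order all_algebra.
From mathcomp Require Import Rstruct.
Set Implicit Arguments. Unset Strict Implicit. Unset Printing Implicit Defensive.
Import Order.TTheory GRing.Theory Num.Theory.
Local Open Scope ring_scope.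

Notation RR := Rdefinitions.R.

(* The lattice N = Z^n is 'rV[int]_n, its dual M = Z^n acting by the dot
   product, and N_R = R^n is 'rV[RR]_n. *)
Definition toR n (v : 'rV[int]_n) : 'rV[RR]_n := map_mx (fun z : int => z%:~R) v.

Definition evalM n (m : 'rV[int]_n) (x : 'rV[RR]_n) : RR :=
  \sum_(k < n) (m 0 k)%:~R * x 0 k.

Definition pairM n (m v : 'rV[int]_n) : int := \sum_(k < n) m 0 k * v 0 k.

Section Fan.
(* A (simplicial) fan in Z^n: its rays are indexed by the finite type I, with
   primitive generators u : I -> Z^n; its cones are given by the sets of rays
   generating them, C : {set {set I}} (cone(sigma) = R_{>=0}-span of u_i, i in sigma). *)
Variables (n : nat) (I : finType) (u : I -> 'rV[int]_n) (C : {set {set I}}).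

Definition inCone (s : {set I}) (x : 'rV[RR]_n) : Prop :=
  exists a : I -> RR, (forall i, 0 <= a i) /\ x = \sum_(i in s) a i *: toR (u i).

Definition extends_to_basis (s : {set I}) : Prop :=
  exists B : 'M[int]_n, B \in unitmx /\ forall i, i \in s -> exists k, row k B = u i.

Definition UnimodularFan : Prop :=
  [/\ set0 \in C,
      (forall i, [set i] \in C) /\ injective u,     (* I indexes the rays  *)
      (forall s t : {set I}, s \in C -> t \subset s -> t \in C),
      (forall s t : {set I}, s \in C -> t \in C -> forall x,
          inCone s x -> inCone t x -> inCone (s :&: t) x)
    & (forall s : {set I}, s \in C -> extends_to_basis s)].

(* ---- The star fan Sigma^sigma, modelled inside N_R = R^n. ----
   N_R/span(sigma) and its lattice N/Span_Z(sigma /\ N) are modelled by their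
   preimages: the cones of Sigma^sigma are the images of the cones t \in C with
   sigma \subset t, the dual lattice of N/Span(sigma) is {m in M | m = 0 on sigma},
   and a function on |Sigma^sigma| is represented by its pullback, restricted to
   the union of the cones t \supseteq sigma (a function on t that is linear with
   a slope vanishing on sigma extends uniquely to t + span(sigma)). *)

Definition vanishes_on (sigma : {set I}) (m : 'rV[int]_n) : Prop :=
  forall i, i \in sigma -> pairM m (u i) = 0.

Definition PLstar (sigma : {set I}) (f : 'rV[RR]_n -> RR) : Prop :=
  forall t, t \in C -> sigma \subset t ->
    exists m : 'rV[int]_n, vanishes_on sigma m /\
      forall x, inCone t x -> f x = evalM m x.

Definition eqPLbar (sigma : {set I}) (f g : 'rV[RR]_n -> RR) : Prop :=
  exists m : 'rV[int]_n, vanishes_on sigma m /\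
    forall t, t \in C -> sigma \subset t ->
      forall x, inCone t x -> f x - g x = evalM m x.

Definition starRay (sigma : {set I}) (rho : I) : bool :=
  (rho \notin sigma) && (rho |: sigma \in C).

Definition Courant (sigma : {set I}) (rho : I) (delta : 'rV[RR]_n -> RR) : Prop :=
  [/\ PLstar sigma delta,
      delta (toR (u rho)) = 1
    & forall rho', starRay sigma rho' -> rho' != rho -> delta (toR (u rho')) = 0].

(* EhrPoly sigma chi : Sigma^sigma is Ehrhart and chi (a function on
   PL(Sigma^sigma), constant on classes, i.e. a function on the quotient
   underline{PL}(Sigma^sigma)) is its Ehrhart polynomial chi_{Sigma^sigma}.
   The star fan (Sigma^sigma)^rho of Sigma^sigma is Sigma^(rho |: sigma),
   and [f]^rho is the class of f - m with m in the dual lattice of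
   N/Span(sigma) agreeing with f on the cone (rho |: sigma). *)
Inductive EhrPoly (sigma : {set I}) (chi : ('rV[RR]_n -> RR) -> int) : Prop :=
  EhrPolyI (chis : I -> ('rV[RR]_n -> RR) -> int) of
    (forall rho, starRay sigma rho -> EhrPoly (rho |: sigma) (chis rho)) &
    (forall f g, PLstar sigma f -> PLstar sigma g -> eqPLbar sigma f g ->
        chi f = chi g) &
    chi (fun _ => 0) = 1 &
    (forall f rho delta m, PLstar sigma f -> starRay sigma rho ->
        Courant sigma rho delta ->
        vanishes_on sigma m ->
        (forall x, inCone (rho |: sigma) x -> f x = evalM m x) ->
        chi f = chi (fun x => f x - delta x) + chis rho (fun x => f x - evalM m x)).

Definition PL := PLstar set0.

Definition IsEhrhartPolynomial (chi : ('rV[RR]_n -> RR) -> int) : Prop :=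
  UnimodularFan /\ EhrPoly set0 chi.

Definition Ehrhart : Prop := exists chi, IsEhrhartPolynomial chi.

End Fan.

Definition prod_u n1 n2 (I1 I2 : finType) (u1 : I1 -> 'rV[int]_n1)
  (u2 : I2 -> 'rV[int]_n2) (i : I1 + I2) : 'rV[int]_(n1 + n2) :=
  match i with
  | inl i1 => row_mx (u1 i1) 0
  | inr i2 => row_mx 0 (u2 i2)
  end.

(* the cones of Sigma1 x Sigma2 are the sigma1 x sigma2 *)
Definition prod_C (I1 I2 : finType) (C1 : {set {set I1}}) (C2 : {set {set I2}})
  : {set {set I1 + I2}} :=
  [set s : {set I1 + I2} | (inl @^-1: s \in C1) && (inr @^-1: s \in C2)].

Definition prod_fun n1 n2 (f1 : 'rV[RR]_n1 -> RR) (f2 : 'rV[RR]_n2 -> RR)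
  (x : 'rV[RR]_(n1 + n2)) : RR := f1 (lsubmx x) + f2 (rsubmx x).

(* Main.v *)
Require Import Defs.
From mathcomp Require Import all_boot all_order all_algebra.
From mathcomp Require Import Rstruct.
From Stdlib Require Import FunctionalExtensionality.
Set Implicit Arguments. Unset Strict Implicit. Unset Printing Implicit Defensive.
Import Order.TTheory GRing.Theory Num.Theory.
Local Open Scope ring_scope.

Lemma evalM_toR n (m v : 'rV[int]_n) : evalM m (toR v) = (pairM m v)%:~R.
Proof.
rewrite /evalM /pairM rmorph_sum /=; apply: eq_bigr => k _.
by rewrite /toR mxE intrM.
Qed.

Lemma evalM_add n (m : 'rV[int]_n) x y : evalM m (x + y) = evalM m x + evalM m y.
Proof. by rewrite /evalM -big_split /=; apply: eq_bigr => k _; rewrite mxE mulrDr. Qed.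

Lemma evalM_scale n (m : 'rV[int]_n) a x : evalM m (a *: x) = a * evalM m x.
Proof. by rewrite /evalM mulr_sumr; apply: eq_bigr => k _; rewrite mxE mulrCA. Qed.

Lemma evalM0x n (m : 'rV[int]_n) : evalM m 0 = 0.
Proof. by rewrite /evalM big1 // => k _; rewrite mxE mulr0. Qed.

Lemma evalM_sum n (I : finType) (m : 'rV[int]_n) (A : {pred I}) (a : I -> RR) X :
  evalM m (\sum_(i in A) a i *: X i) = \sum_(i in A) a i * evalM m (X i).
Proof.
elim/big_rec2: _ => [|i y z _ IH]; first exact: evalM0x.
by rewrite evalM_add evalM_scale IH.
Qed.

Lemma evalM_sub n (m1 m2 : 'rV[int]_n) x : evalM (m1 - m2) x = evalM m1 x - evalM m2 x.
Proof.
rewrite /evalM -sumrB; apply: eq_bigr => k _.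
by rewrite !mxE intrD intrN mulrBl.
Qed.

Lemma evalM0m n (x : 'rV[RR]_n) : evalM 0 x = 0.
Proof. by rewrite /evalM big1 // => k _; rewrite mxE mul0r. Qed.

Lemma pairM_sub n (m1 m2 v : 'rV[int]_n) : pairM (m1 - m2) v = pairM m1 v - pairM m2 v.
Proof. by rewrite /pairM -sumrB; apply: eq_bigr => k _; rewrite !mxE mulrBl. Qed.

Lemma evalM_l n1 n2 (m : 'rV[int]_(n1 + n2)) x :
  evalM m (row_mx x 0) = evalM (lsubmx m) x.
Proof.
rewrite /evalM big_split_ord /= [X in _ + X]big1 ?addr0.
  by apply: eq_bigr => k _; rewrite row_mxEl !mxE.
by move=> k _; rewrite row_mxEr mxE mulr0.
Qed.

Lemma evalM_r n1 n2 (m : 'rV[int]_(n1 + n2)) x :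
  evalM m (row_mx 0 x) = evalM (rsubmx m) x.
Proof.
rewrite /evalM big_split_ord /= big1 ?add0r.
  by apply: eq_bigr => k _; rewrite row_mxEr !mxE.
by move=> k _; rewrite row_mxEl mxE mulr0.
Qed.

Lemma pairM_l n1 n2 (m : 'rV[int]_(n1 + n2)) x :
  pairM m (row_mx x 0) = pairM (lsubmx m) x.
Proof.
rewrite /pairM big_split_ord /= [X in _ + X]big1 ?addr0.
  by apply: eq_bigr => k _; rewrite row_mxEl !mxE.
by move=> k _; rewrite row_mxEr mxE mulr0.
Qed.

Lemma pairM_r n1 n2 (m : 'rV[int]_(n1 + n2)) x :
  pairM m (row_mx 0 x) = pairM (rsubmx m) x.
Proof.
rewrite /pairM big_split_ord /= big1 ?add0r.
  by apply: eq_bigr => k _; rewrite row_mxEr !mxE.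
by move=> k _; rewrite row_mxEl mxE mulr0.
Qed.

Lemma toR_row n1 n2 (a : 'rV[int]_n1) (b : 'rV[int]_n2) :
  toR (row_mx a b) = row_mx (toR a) (toR b).
Proof. by rewrite /toR map_row_mx. Qed.

Lemma toR0 n : toR (0 : 'rV[int]_n) = 0.
Proof. by apply/matrixP => i j; rewrite !mxE. Qed.

Section Gen.
Variables (n : nat) (I : finType) (u : I -> 'rV[int]_n) (C : {set {set I}}).

Lemma PL_sub s f g : PLstar u C s f -> PLstar u C s g ->
  PLstar u C s (fun x => f x - g x).
Proof.
move=> Hf Hg t tC st; have [m1 [v1 e1]] := Hf t tC st.
have [m2 [v2 e2]] := Hg t tC st; exists (m1 - m2); split.
  by move=> i is_; rewrite pairM_sub v1 // v2 // subr0.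
by move=> x cx; rewrite evalM_sub e1 // e2.
Qed.

Lemma PL_lin s m : vanishes_on u s m -> PLstar u C s (evalM m).
Proof. by move=> v t _ _; exists m. Qed.

Lemma inCone_gen (t : {set I}) i : i \in t -> inCone u t (toR (u i)).
Proof.
move=> it; exists (fun j => if j == i then 1 else 0); split.
  by move=> j; case: (j == i).
rewrite (bigD1 i) //= eqxx scale1r big1 ?addr0 // => j /andP [_ /negbTE ->].
by rewrite scale0r.
Qed.

Lemma inCone0 (t : {set I}) : inCone u t 0.
Proof.
exists (fun _ => 0); split=> //; by rewrite big1 // => j _; rewrite scale0r.
Qed.

End Gen.
Section Prod.
Variables (n1 n2 : nat) (I1 I2 : finType)
  (u1 : I1 -> 'rV[int]_n1) (C1 : {set {set I1}})
  (u2 : I2 -> 'rV[int]_n2) (C2 : {set {set I2}}).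

Local Notation pu := (prod_u u1 u2).
Local Notation pC := (prod_C C1 C2).

Definition Pset (a : {set I1}) (b : {set I2}) : {set I1 + I2} :=
  inl @: a :|: inr @: b.

Lemma inl_P r a b : (inl r \in Pset a b) = (r \in a).
Proof.
rewrite /Pset inE mem_imset; last by move=> x y [].
case: (r \in a) => //=; apply/negbTE/imsetP => [[y _]] //.
Qed.

Lemma inr_P r a b : (inr r \in Pset a b) = (r \in b).
Proof.
rewrite /Pset inE (mem_imset _ _ (f := inr)); last by move=> x y [].
case: (r \in b); rewrite ?orbT //= orbF; apply/negbTE/imsetP => [[y _]] //.
Qed.

Lemma preim_l a b : inl @^-1: Pset a b = a.
Proof. by apply/setP => x; rewrite inE inl_P. Qed.

Lemma preim_r a b : inr @^-1: Pset a b = b.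
Proof. by apply/setP => x; rewrite inE inr_P. Qed.

Lemma P_pC a b : (Pset a b \in pC) = (a \in C1) && (b \in C2).
Proof. by rewrite /prod_C inE preim_l preim_r. Qed.

Lemma P_decomp (s : {set I1 + I2}) : s = Pset (inl @^-1: s) (inr @^-1: s).
Proof. by apply/setP => [[x|x]]; rewrite ?inl_P ?inr_P !inE. Qed.

Lemma U1_Pl r a b : inl r |: Pset a b = Pset (r |: a) b.
Proof.
apply/setP => [[x|x]]; rewrite in_setU1 ?inl_P ?inr_P ?in_setU1 //.
Qed.

Lemma U1_Pr r a b : inr r |: Pset a b = Pset a (r |: b).
Proof.
apply/setP => [[x|x]]; rewrite in_setU1 ?inl_P ?inr_P ?in_setU1 //.
Qed.

Lemma P_sub (a c : {set I1}) (b d : {set I2}) : a \subset c -> b \subset d -> Pset a b \subset Pset c d.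
Proof.
move=> ac bd; apply/subsetP => [[x|x]]; rewrite ?inl_P ?inr_P => h.
  exact: (subsetP ac). exact: (subsetP bd).
Qed.

Lemma P00 : Pset set0 set0 = set0.
Proof. by apply/setP => [[x|x]]; rewrite ?inl_P ?inr_P !inE. Qed.

Lemma sum_split (V : zmodType) (s : {set I1 + I2}) (F : I1 + I2 -> V) :
  \sum_(i in s) F i =
  \sum_(j in inl @^-1: s) F (inl j) + \sum_(j in inr @^-1: s) F (inr j).
Proof.
rewrite big_sumType; congr (_ + _); apply: eq_bigl => j; by rewrite inE.
Qed.

Lemma sum_row_mx m k1 k2 (A : {pred I1}) (F : I1 -> 'M[RR]_(m, k1)) (G : I1 -> 'M[RR]_(m, k2)) :
  \sum_(i in A) row_mx (F i) (G i) = row_mx (\sum_(i in A) F i) (\sum_(i in A) G i).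
Proof.
elim/big_rec3: _ => [|i a b c _ ->]; first by rewrite row_mx0.
by rewrite add_row_mx.
Qed.

Lemma sum_row_mx2 m k1 k2 (A : {pred I2}) (F : I2 -> 'M[RR]_(m, k1)) (G : I2 -> 'M[RR]_(m, k2)) :
  \sum_(i in A) row_mx (F i) (G i) = row_mx (\sum_(i in A) F i) (\sum_(i in A) G i).
Proof.
elim/big_rec3: _ => [|i a b c _ ->]; first by rewrite row_mx0.
by rewrite add_row_mx.
Qed.

Lemma decomp (a : I1 + I2 -> RR) (s : {set I1 + I2}) :
  \sum_(i in s) a i *: toR (pu i) =
  row_mx (\sum_(j in inl @^-1: s) a (inl j) *: toR (u1 j))
         (\sum_(j in inr @^-1: s) a (inr j) *: toR (u2 j)).
Proof.
rewrite sum_split /=.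
under eq_bigr do rewrite toR_row toR0 scale_row_mx scaler0.
under [X in _ + X]eq_bigr do rewrite toR_row toR0 scale_row_mx scaler0.
by rewrite sum_row_mx sum_row_mx2 add_row_mx !big1_eq addr0 add0r.
Qed.

Lemma cone_l t1 t2 x : inCone u1 t1 x -> inCone pu (Pset t1 t2) (row_mx x 0).
Proof.
move=> [a [a0 ->]]; exists (fun i => match i with inl j => a j | inr _ => 0 end).
split; first by case.
rewrite decomp preim_l preim_r; congr row_mx; rewrite big1 // => j _.
by rewrite scale0r.
Qed.

Lemma cone_r t1 t2 x : inCone u2 t2 x -> inCone pu (Pset t1 t2) (row_mx 0 x).
Proof.
move=> [a [a0 ->]]; exists (fun i => match i with inl _ => 0 | inr j => a j end).
split; first by case.
rewrite decomp preim_l preim_r; congr row_mx; rewrite big1 // => j _.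
by rewrite scale0r.
Qed.

End Prod.
Lemma u_neq0 n (I : finType) (u : I -> 'rV[int]_n) C i :
  UnimodularFan u C -> u i != 0.
Proof.
case=> _ [H1 _] _ _ Hb; have [B [Bu HB]] := Hb _ (H1 i).
have [k Hk] := HB i (set11 i); rewrite -Hk; apply/eqP => H0.
have := mulmxV Bu; move/(congr1 (row k)); rewrite row_mul H0 mul0mx.
move/matrixP => /(_ 0 k); rewrite !mxE eqxx /= => /eqP.
by rewrite eq_sym oner_eq0.
Qed.

Section Prod3.
Variables (n1 n2 : nat) (I1 I2 : finType)
  (u1 : I1 -> 'rV[int]_n1) (C1 : {set {set I1}})
  (u2 : I2 -> 'rV[int]_n2) (C2 : {set {set I2}}).

Local Notation pu := (prod_u u1 u2).
Local Notation pC := (prod_C C1 C2).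

Lemma prod_unimod : UnimodularFan u1 C1 -> UnimodularFan u2 C2 ->
  UnimodularFan pu pC.
Proof.
move=> F1 F2; have F1' := F1; have F2' := F2.
case: F1' => z1 [s1 i1] f1 c1 b1; case: F2' => z2 [s2 i2] f2 c2 b2.
split.
- by rewrite -P00 P_pC z1 z2.
- split.
    case=> r.
      have -> : [set inl r] = Pset [set r] (set0 : {set I2}).
        by apply/setP => [[x|x]]; rewrite ?inl_P ?inr_P !inE.
      by rewrite P_pC s1 z2.
    have -> : [set inr r] = Pset (set0 : {set I1}) [set r].
      by apply/setP => [[x|x]]; rewrite ?inl_P ?inr_P !inE.
    by rewrite P_pC s2 z1.
  case=> [a|a] [b|b] /= H.
  + by have [/i1 -> _] := eq_row_mx H.
  + have [H1 H2] := eq_row_mx H; by move: (u_neq0 a F1); rewrite H1 eqxx.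
  + have [H1 H2] := eq_row_mx H; by move: (u_neq0 b F1); rewrite H1 eqxx.
  + by have [_ /i2 ->] := eq_row_mx H.
- move=> s t; rewrite !inE => /andP [h1 h2] ts; apply/andP; split.
    by apply: f1 h1 _; apply: preimsetS.
  by apply: f2 h2 _; apply: preimsetS.
- move=> s t; rewrite !inE => /andP [hs1 hs2] /andP [ht1 ht2] x.
  move=> [a [a0 ea]] [b [b0 eb]].
  rewrite decomp in ea; rewrite decomp in eb.
  have [el er] := eq_row_mx (etrans (esym ea) eb).
  have [c1' [c10 ec1]] := c1 _ _ hs1 ht1 _
    (ex_intro _ _ (conj (fun j => a0 (inl j)) (erefl _)))
    (ex_intro _ _ (conj (fun j => b0 (inl j)) el)).
  have [c2' [c20 ec2]] := c2 _ _ hs2 ht2 _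
    (ex_intro _ _ (conj (fun j => a0 (inr j)) (erefl _)))
    (ex_intro _ _ (conj (fun j => b0 (inr j)) er)).
  exists (fun i => match i with inl j => c1' j | inr j => c2' j end); split.
    by case.
  by rewrite decomp !preimsetI -ec1 -ec2 ea.
- move=> s; rewrite inE => /andP [hs1 hs2].
  have [B1 [B1u HB1]] := b1 _ hs1; have [B2 [B2u HB2]] := b2 _ hs2.
  exists (block_mx B1 0 0 B2); split.
    by rewrite unitmxE det_ublock unitrM -!unitmxE B1u B2u.
  case=> [j|j] js.
    have js' : j \in inl @^-1: s by rewrite inE.
    have [k Hk] := HB1 j js'.
    by exists (lshift n2 k); rewrite /block_mx rowKu row_row_mx Hk row0.
  have js' : j \in inr @^-1: s by rewrite inE.
  have [k Hk] := HB2 j js'.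
  by exists (rshift n1 k); rewrite /block_mx rowKd row_row_mx Hk row0.
Qed.

End Prod3.
Lemma pairM0 n (v : 'rV[int]_n) : pairM 0 v = 0.
Proof. by rewrite /pairM big1 // => k _; rewrite mxE mul0r. Qed.

Section Prod4.
Variables (n1 n2 : nat) (I1 I2 : finType)
  (u1 : I1 -> 'rV[int]_n1) (C1 : {set {set I1}})
  (u2 : I2 -> 'rV[int]_n2) (C2 : {set {set I2}}).
Hypothesis faces1 : forall s t : {set I1}, s \in C1 -> t \subset s -> t \in C1.
Hypothesis faces2 : forall s t : {set I2}, s \in C2 -> t \subset s -> t \in C2.

Local Notation pu := (prod_u u1 u2).
Local Notation pC := (prod_C C1 C2).
Local Notation P := (@Pset I1 I2).

Definition chiP (chi1 : ('rV[RR]_n1 -> RR) -> int) (chi2 : ('rV[RR]_n2 -> RR) -> int)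
  (f : 'rV[RR]_(n1 + n2) -> RR) : int :=
  chi1 (fun x => f (row_mx x 0)) * chi2 (fun x => f (row_mx 0 x)).

Lemma van_l s1 s2 m : vanishes_on pu (P s1 s2) m -> vanishes_on u1 s1 (lsubmx m).
Proof. by move=> v i hi; rewrite -pairM_l; apply: (v (inl i)); rewrite inl_P. Qed.

Lemma van_r s1 s2 m : vanishes_on pu (P s1 s2) m -> vanishes_on u2 s2 (rsubmx m).
Proof. by move=> v i hi; rewrite -pairM_r; apply: (v (inr i)); rewrite inr_P. Qed.

Lemma PL_l s1 s2 f : s2 \in C2 -> PLstar pu pC (P s1 s2) f ->
  PLstar u1 C1 s1 (fun x => f (row_mx x 0)).
Proof.
move=> h2 Hf t1 t1C st1.
have tC : P t1 s2 \in pC by rewrite P_pC t1C h2.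
have [m [v e]] := Hf _ tC (P_sub st1 (subxx _)).
exists (lsubmx m); split; first exact: van_l v.
by move=> x cx; rewrite -evalM_l; apply: e; apply: cone_l.
Qed.

Lemma PL_r s1 s2 f : s1 \in C1 -> PLstar pu pC (P s1 s2) f ->
  PLstar u2 C2 s2 (fun x => f (row_mx 0 x)).
Proof.
move=> h1 Hf t2 t2C st2.
have tC : P s1 t2 \in pC by rewrite P_pC t2C h1.
have [m [v e]] := Hf _ tC (P_sub (subxx _) st2).
exists (rsubmx m); split; first exact: van_r v.
by move=> x cx; rewrite -evalM_r; apply: e; apply: cone_r.
Qed.

Lemma eq_l s1 s2 f g : s2 \in C2 -> eqPLbar pu pC (P s1 s2) f g ->
  eqPLbar u1 C1 s1 (fun x => f (row_mx x 0)) (fun x => g (row_mx x 0)).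
Proof.
move=> h2 [m [v e]]; exists (lsubmx m); split; first exact: van_l v.
move=> t1 t1C st1 x cx; rewrite -evalM_l; apply: (e (P t1 s2)).
- by rewrite P_pC t1C h2.
- exact: P_sub.
- exact: cone_l.
Qed.

Lemma eq_r s1 s2 f g : s1 \in C1 -> eqPLbar pu pC (P s1 s2) f g ->
  eqPLbar u2 C2 s2 (fun x => f (row_mx 0 x)) (fun x => g (row_mx 0 x)).
Proof.
move=> h1 [m [v e]]; exists (rsubmx m); split; first exact: van_r v.
move=> t2 t2C st2 x cx; rewrite -evalM_r; apply: (e (P s1 t2)).
- by rewrite P_pC t2C h1.
- exact: P_sub.
- exact: cone_r.
Qed.

Lemma star_l s1 s2 r : starRay pC (P s1 s2) (inl r) -> starRay C1 s1 r.
Proof. by rewrite /starRay inl_P U1_Pl P_pC => /andP [-> /andP [->]]. Qed.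

Lemma star_l' s1 s2 r : s2 \in C2 -> starRay C1 s1 r -> starRay pC (P s1 s2) (inl r).
Proof. by move=> h2; rewrite /starRay inl_P U1_Pl P_pC h2 andbT. Qed.

Lemma star_r s1 s2 r : starRay pC (P s1 s2) (inr r) -> starRay C2 s2 r.
Proof. by rewrite /starRay inr_P U1_Pr P_pC => /andP [-> /andP [_ ->]]. Qed.

Lemma star_r' s1 s2 r : s1 \in C1 -> starRay C2 s2 r -> starRay pC (P s1 s2) (inr r).
Proof. by move=> h1; rewrite /starRay inr_P U1_Pr P_pC h1. Qed.

Lemma Cour_l s1 s2 r d : s2 \in C2 -> Courant pu pC (P s1 s2) (inl r) d ->
  Courant u1 C1 s1 r (fun x => d (row_mx x 0)).
Proof.
move=> h2 [Hpl H1 H0]; split.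
- exact: PL_l Hpl.
- by rewrite -toR0 -toR_row.
- move=> r' Hs ne; rewrite -(toR0 n2) -toR_row.
  by apply: (H0 (inl r')); [apply: star_l' | apply: contra ne => /eqP [->]].
Qed.

Lemma Cour_r s1 s2 r d : s1 \in C1 -> Courant pu pC (P s1 s2) (inr r) d ->
  Courant u2 C2 s2 r (fun x => d (row_mx 0 x)).
Proof.
move=> h1 [Hpl H1 H0]; split.
- exact: PL_r Hpl.
- by rewrite -toR0 -toR_row.
- move=> r' Hs ne; rewrite -(toR0 n1) -toR_row.
  by apply: (H0 (inr r')); [apply: star_r' | apply: contra ne => /eqP [->]].
Qed.

Lemma Cour_l_other s1 s2 r d : s1 \in C1 -> s2 \in C2 ->
  Courant pu pC (P s1 s2) (inl r) d ->
  forall t2, t2 \in C2 -> s2 \subset t2 -> forall x, inCone u2 t2 x ->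
  d (row_mx 0 x) = 0.
Proof.
move=> h1 h2 [Hpl H1 H0] t2 t2C st2 x cx.
have tC : P s1 t2 \in pC by rewrite P_pC t2C h1.
have [m [v e]] := Hpl _ tC (P_sub (subxx _) st2).
rewrite e; last exact: cone_r.
case: cx => a [_ ->]; rewrite evalM_r evalM_sum big1 // => i it.
case: (boolP (i \in s2)) => is2.
  by rewrite evalM_toR -pairM_r (v (inr i)) ?mulr0 // inr_P.
rewrite -evalM_r -e; last by apply: cone_r; apply: inCone_gen.
rewrite -(toR0 n1) -toR_row (H0 (inr i)) ?mulr0 //.
apply: star_r' => //; rewrite /starRay is2 /=; apply: (faces2 t2C).
by rewrite subUset sub1set it st2.
Qed.

Lemma Cour_r_other s1 s2 r d : s1 \in C1 -> s2 \in C2 ->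
  Courant pu pC (P s1 s2) (inr r) d ->
  forall t1, t1 \in C1 -> s1 \subset t1 -> forall x, inCone u1 t1 x ->
  d (row_mx x 0) = 0.
Proof.
move=> h1 h2 [Hpl H1 H0] t1 t1C st1 x cx.
have tC : P t1 s2 \in pC by rewrite P_pC t1C h2.
have [m [v e]] := Hpl _ tC (P_sub st1 (subxx _)).
rewrite e; last exact: cone_l.
case: cx => a [_ ->]; rewrite evalM_l evalM_sum big1 // => i it.
case: (boolP (i \in s1)) => is1.
  by rewrite evalM_toR -pairM_l (v (inl i)) ?mulr0 // inl_P.
rewrite -evalM_l -e; last by apply: cone_l; apply: inCone_gen.
rewrite -(toR0 n2) -toR_row (H0 (inl i)) ?mulr0 //.
apply: star_l' => //; rewrite /starRay is1 /=; apply: (faces1 t1C).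
by rewrite subUset sub1set it st1.
Qed.

End Prod4.
Section Prod5.
Variables (n1 n2 : nat) (I1 I2 : finType)
  (u1 : I1 -> 'rV[int]_n1) (C1 : {set {set I1}})
  (u2 : I2 -> 'rV[int]_n2) (C2 : {set {set I2}}).
Hypothesis faces1 : forall s t : {set I1}, s \in C1 -> t \subset s -> t \in C1.
Hypothesis faces2 : forall s t : {set I2}, s \in C2 -> t \subset s -> t \in C2.

Local Notation pu := (prod_u u1 u2).
Local Notation pC := (prod_C C1 C2).
Local Notation P := (@Pset I1 I2).

Lemma mainE : forall s1 chi1, EhrPoly u1 C1 s1 chi1 -> s1 \in C1 ->
  forall s2 chi2, EhrPoly u2 C2 s2 chi2 -> s2 \in C2 ->
  EhrPoly pu pC (P s1 s2) (chiP chi1 chi2).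
Proof.
move=> s1 chi1 H1; elim: H1 => {s1 chi1} s1 chi1 chis1 Hr1 IH1 wd1 z1 rc1 h1 s2 chi2 H2.
elim: H2 => {s2 chi2} s2 chi2 chis2 Hr2 IH2 wd2 z2 rc2 h2.
have H2 : EhrPoly u2 C2 s2 chi2 by econstructor; eauto.
apply EhrPolyI with (fun rho => match rho with
   | inl r => chiP (chis1 r) chi2 | inr r => chiP chi1 (chis2 r) end).
- case=> r Hs.
    rewrite U1_Pl; have Hs1 := star_l Hs.
    have hh : r |: s1 \in C1 by case/andP: Hs1.
    exact: IH1 Hs1 hh _ _ H2 h2.
  rewrite U1_Pr; have Hs2 := star_r Hs.
  have hh : r |: s2 \in C2 by case/andP: Hs2.
  exact: IH2 Hs2 hh.
- move=> f g Hf Hg Hfg; rewrite /chiP.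
  rewrite (wd1 _ _ (PL_l h2 Hf) (PL_l h2 Hg) (eq_l h2 Hfg)).
  by rewrite (wd2 _ _ (PL_r h1 Hf) (PL_r h1 Hg) (eq_r h1 Hfg)).
- by rewrite /chiP /= z1 z2 mulr1.
- move=> f [r|r] d m Hf Hs Hd Hv He; rewrite /chiP /=.
  + have Hfd := PL_sub Hf (let: And3 p _ _ := Hd in p).
    have Hfm := PL_sub Hf (@PL_lin _ _ pu pC _ _ Hv).
    have E1 : chi2 (fun x => f (row_mx 0 x) - d (row_mx 0 x)) = chi2 (fun x => f (row_mx 0 x)).
      symmetry; apply: wd2; [exact: PL_r h1 Hf | exact: PL_r h1 Hfd |].
      exists 0; split; first by move=> i _; rewrite pairM0.
      move=> t2 t2C st2 x cx.
      by rewrite (Cour_l_other faces2 h1 h2 Hd t2C st2 cx) evalM0m subr0 subrr.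
    have E2 : chi2 (fun x => f (row_mx 0 x) - evalM m (row_mx 0 x)) = chi2 (fun x => f (row_mx 0 x)).
      symmetry; apply: wd2; [exact: PL_r h1 Hf | exact: PL_r h1 Hfm |].
      exists (rsubmx m); split; first exact: van_r Hv.
      by move=> t2 t2C st2 x cx; rewrite evalM_r opprB addrC subrK.
    rewrite E1 E2 -mulrDl; congr (_ * _).
    have -> : (fun x => f (row_mx x 0) - evalM m (row_mx x 0)) =
              (fun x => f (row_mx x 0) - evalM (lsubmx m) x).
      by apply: functional_extensionality => x; rewrite evalM_l.
    apply: (rc1 _ _ _ _ (PL_l h2 Hf) (star_l Hs) (Cour_l h2 Hd) (van_l Hv)).
    move=> x cx; rewrite -evalM_l; apply: He; rewrite U1_Pl; exact: cone_l.
  + have Hfd := PL_sub Hf (let: And3 p _ _ := Hd in p).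
    have Hfm := PL_sub Hf (@PL_lin _ _ pu pC _ _ Hv).
    have E1 : chi1 (fun x => f (row_mx x 0) - d (row_mx x 0)) = chi1 (fun x => f (row_mx x 0)).
      symmetry; apply: wd1; [exact: PL_l h2 Hf | exact: PL_l h2 Hfd |].
      exists 0; split; first by move=> i _; rewrite pairM0.
      move=> t1 t1C st1 x cx.
      by rewrite (Cour_r_other faces1 h1 h2 Hd t1C st1 cx) evalM0m subr0 subrr.
    have E2 : chi1 (fun x => f (row_mx x 0) - evalM m (row_mx x 0)) = chi1 (fun x => f (row_mx x 0)).
      symmetry; apply: wd1; [exact: PL_l h2 Hf | exact: PL_l h2 Hfm |].
      exists (lsubmx m); split; first exact: van_l Hv.
      by move=> t1 t1C st1 x cx; rewrite evalM_l opprB addrC subrK.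
    rewrite E1 E2 -mulrDr; congr (_ * _).
    have -> : (fun x => f (row_mx 0 x) - evalM m (row_mx 0 x)) =
              (fun x => f (row_mx 0 x) - evalM (rsubmx m) x).
      by apply: functional_extensionality => x; rewrite evalM_r.
    apply: (rc2 _ _ _ _ (PL_r h1 Hf) (star_r Hs) (Cour_r h1 Hd) (van_r Hv)).
    move=> x cx; rewrite -evalM_r; apply: He; rewrite U1_Pr; exact: cone_r.
Qed.

End Prod5.

Lemma PL_at0 n (I : finType) (u : I -> 'rV[int]_n) (C : {set {set I}}) f :
  set0 \in C -> PL u C f -> f 0 = 0.
Proof.
move=> z Hf; have [m [_ e]] := Hf set0 z (sub0set _).
by rewrite e ?evalM0x //; apply: inCone0.
Qed.

Theorem proposition5 (n1 n2 : nat) (I1 I2 : finType)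
  (u1 : I1 -> 'rV[int]_n1) (C1 : {set {set I1}})
  (u2 : I2 -> 'rV[int]_n2) (C2 : {set {set I2}})
  (chi1 : ('rV[RR]_n1 -> RR) -> int) (chi2 : ('rV[RR]_n2 -> RR) -> int) :
  IsEhrhartPolynomial u1 C1 chi1 ->
  IsEhrhartPolynomial u2 C2 chi2 ->
  exists chi : ('rV[RR]_(n1 + n2) -> RR) -> int,
    IsEhrhartPolynomial (prod_u u1 u2) (prod_C C1 C2) chi /\
    forall f1 f2, PL u1 C1 f1 -> PL u2 C2 f2 ->
      chi (prod_fun f1 f2) = chi1 f1 * chi2 f2.
Proof.
move=> [U1 E1] [U2 E2]; exists (chiP chi1 chi2).
have U1' := U1; have U2' := U2.
case: U1' => z1 _ fa1 _ _; case: U2' => z2 _ fa2 _ _.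
split; first split.
- exact: prod_unimod.
- rewrite -P00; exact: (mainE fa1 fa2 E1 z1 E2 z2).
move=> f1 f2 H1 H2; rewrite /chiP /prod_fun.
have -> : (fun x => f1 (lsubmx (row_mx x (0 : 'rV[RR]_n2))) + f2 (rsubmx (row_mx x (0 : 'rV[RR]_n2)))) = f1.
  apply: functional_extensionality => x.
  by rewrite row_mxKl row_mxKr (PL_at0 z2 H2) addr0.
have -> : (fun x => f1 (lsubmx (row_mx (0 : 'rV[RR]_n1) x)) + f2 (rsubmx (row_mx (0 : 'rV[RR]_n1) x))) = f2.
  apply: functional_extensionality => x.
  by rewrite row_mxKl row_mxKr (PL_at0 z1 H1) add0r.
by [].
Qed.
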